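(* Let $M_1,\dots,M_n\in\mathrm{St}_{p,k}$ be such that $A=\frac1n\sum_{i=1}^n M_i$ has full column rank $k$, and let $G=\operatorname{uf}(A)=A(A^\top A)^{-1/2}$ be the orthogonal factor of the polar decomposition of $A$. Then $$\frac1n\sum_{i=1}^n P^{\mathrm{St}}_G(M_i-G)=0,$$ so that $G$ is a (closed-form) solution of the $R$-barycenter fixed-point equation $G=R^{\mathrm{o}}_G\big(\frac1n\sum_{i=1}^n (R^{\mathrm{o}}_G)^{-1}(M_i)\big)$ associated with the orthographic retraction $R^{\mathrm{o}}$ on $\mathrm{St}_{p,k}$, whose inverse is $(R^{\mathrm{o}}_G)^{-1}(V)=P^{\mathrm{St}}_G(V-G)$. *)

(* Defs.v *)
From mathcomp Require Import all_boot all_order all_algebra.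
Set Implicit Arguments. Unset Strict Implicit. Unset Printing Implicit Defensive.
Import Order.TTheory GRing.Theory Num.Theory.
Local Open Scope ring_scope.

Definition stiefel (R : numDomainType) (p k : nat) (M : 'M[R]_(p, k)) : Prop :=
  M^T *m M = 1%:M.

Definition symm (R : numFieldType) (k : nat) (X : 'M[R]_k) : 'M[R]_k :=
  2^-1 *: (X + X^T).

(* Orthogonal projection onto the tangent space T_G St_{p,k}
   (Euclidean/embedded metric): P_G(V) = V - G sym(G^T V). *)
Definition projSt (R : numFieldType) (p k : nat) (G V : 'M[R]_(p, k))
  : 'M[R]_(p, k) :=
  V - G *m symm (G^T *m V).

Definition sym_posdef (R : numDomainType) (k : nat) (Q : 'M[R]_k) : Prop :=
  Q^T = Q /\ forall v : 'rV[R]_k, v != 0 -> 0 < (v *m Q *m v^T) 0 0.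

Definition is_psd_sqrt (R : numDomainType) (k : nat) (S Q : 'M[R]_k) : Prop :=
  sym_posdef Q /\ Q *m Q = S.

(* orthogonal polar factor uf(A) = A (A^T A)^{-1/2}, given Q = (A^T A)^{1/2} *)
Definition uf_with (R : fieldType) (p k : nat) (A : 'M[R]_(p, k)) (Q : 'M[R]_k)
  : 'M[R]_(p, k) :=
  A *m invmx Q.

(* Main.v *)
Require Import Defs.
From mathcomp Require Import all_boot all_order all_algebra.
Import Order.TTheory GRing.Theory Num.Theory.
Local Open Scope ring_scope.

Lemma projStE (R : realFieldType) (p k : nat) (G V : 'M[R]_(p, k)) :
  projSt G V = V - 2^-1 *: (G *m (G^T *m V) + G *m (V^T *m G)).
Proof.
by rewrite /projSt /symm -scalemxAr mulmxDr trmx_mul trmxK.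
Qed.

Lemma zmod_aux (T : zmodType) (v w a b c d : T) :
  v + w - (a + c + (b + d)) = v - (a + b) + (w - (c + d)).
Proof. by rewrite [RHS]addrACA -opprD [a + b + _]addrACA. Qed.

Lemma projStD (R : realFieldType) (p k : nat) (G V W : 'M[R]_(p, k)) :
  projSt G (V + W) = projSt G V + projSt G W.
Proof.
rewrite !projStE [(V+W)^T]linearD /= !mulmxDr !mulmxDl !mulmxDr !scalerDr.
exact: zmod_aux.
Qed.

Lemma projStZ (R : realFieldType) (p k : nat) (G V : 'M[R]_(p, k)) a :
  projSt G (a *: V) = a *: projSt G V.
Proof.
rewrite !projStE [(a *: V)^T]linearZ /= -!scalemxAr -!scalemxAl -!scalemxAr.
by rewrite -scalerDr scalerBr !scalerA mulrC.
Qed.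

Lemma Q_unit (R : realFieldType) (k : nat) (Q : 'M[R]_k) :
  sym_posdef Q -> Q \in unitmx.
Proof.
case=> _ Hpos; rewrite unitmxE unitfE; apply/negP => /det0P [v v0 vQ].
by have := Hpos v v0; rewrite vQ mul0mx mxE ltxx.
Qed.

Theorem mainTheorem3 (R : realFieldType) (p k n : nat)
  (M : 'I_n -> 'M[R]_(p, k)) (Q : 'M[R]_k) :
  (0 < n)%N ->
  (forall i, stiefel (M i)) ->
  let A := n%:R^-1 *: \sum_(i < n) M i in
  \rank A = k ->
  is_psd_sqrt (A^T *m A) Q ->
  let G := uf_with A Q in
  n%:R^-1 *: \sum_(i < n) projSt G (M i - G) = 0.
Proof.
move=> n0 _ A _ [Qpd QQ] G.
have Qu := @Q_unit _ _ _ Qpd; case: Qpd => Qsym _.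
have P0 : projSt G 0 = 0 by have := @projStZ _ _ _ G 0 0; rewrite !scale0r.
rewrite -(big_morph (projSt G) (@projStD _ _ _ G) P0) -projStZ.
have nz : n%:R != 0 :> R by rewrite pnatr_eq0 -lt0n.
have -> : n%:R^-1 *: \sum_(i < n) (M i - G) = A - G.
  rewrite sumrB sumr_const card_ord -scaler_nat scalerBr scalerA mulVf //.
  by rewrite scale1r.
have GA : G^T *m A = Q.
  rewrite /G /uf_with trmx_mul trmx_inv Qsym -mulmxA -QQ mulmxA mulVmx //.
  by rewrite mul1mx.
have GG : G^T *m G = 1%:M.
  by rewrite {2}/G /uf_with mulmxA GA mulmxV.
have E : G^T *m (A - G) = Q - 1%:M by rewrite mulmxBr GA GG.
rewrite /projSt E /symm linearB /= trmx1 Qsym -mulr2n -scaler_nat scalerA mulVf;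
  last by rewrite pnatr_eq0.
rewrite scale1r mulmxBr mulmx1 /G /uf_with -mulmxA mulVmx // mulmx1.
by rewrite subrr.
Qed.
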